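(* Let $\mathcal V$ be a finite set of variables, $\mathcal P$ a finite set of labels, and $\mathcal C$ a finite set of nonempty subsets of $\mathcal V$. For each $C\in\mathcal C$ let $\mathcal D_C\subseteq\mathcal P^C$ and $\hat\theta_{C,\vec d}\le0$ for $\vec d\in\mathcal D_C$, and suppose every potential is permuted $\mathcal P^n$-Potts: for all $C\in\mathcal C$, all $\vec d',\vec d''\in\mathcal D_C$ with $\vec d'\ne\vec d''$, and all $i\in C$, we have $d'_i\ne d''_i$. Let $$E^*_I(\vec y,\vec z)=-\sum_{C\in\mathcal C}\sum_{\vec d\in\mathcal D_C}\hat\theta_{C,\vec d}\Big((|C|-1)z_{C,\vec d}-\sum_{\ell\in C}y_{\ell d_\ell}z_{C,\vec d}\Big)$$ for binary $y_{ip}$ ($i\in\mathcal V,p\in\mathcal P$) and $z_{C,\vec d}$, and $D(\vec\lambda)=\min_{\vec y,\vec z\text{ binary}}\big(E^*_I(\vec y,\vec z)+\sum_{i\in\mathcal V}\lambda_i(\sum_{p}y_{ip}-1)\big)$ for $\vec\lambda\in\mathbb R^{\mathcal V}$. Then $\max_{\vec\lambda}D(\vec\lambda)$ equals the optimal value of the linear program in variables $y_{ip}\in[0,1]$ ($i\in\mathcal V,p\in\mathcal P$) and $y_{C,\vec p}\in[0,1]$ ($C\in\mathcal C$, $\vec p\in\mathcal P^C$): $$\min\ \sum_{C\in\mathcal C}\sum_{\vec d\in\mathcal D_C}\hat\theta_{C,\vec d}\,y_{C,\vec d}$$ subject to $y_{C,\vec d}\le y_{\ell d_\ell}$ for all $C\in\mathcal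 C,\vec d\in\mathcal D_C,\ell\in C$; $\sum_{p\in\mathcal P}y_{ip}=1$ for all $i\in\mathcal V$; and $\sum_{\vec p\in\mathcal P^C:\,p_\ell=p_0}y_{C,\vec p}=y_{\ell p_0}$ for all $C\in\mathcal C$, $p_0\in\mathcal P$, $\ell\in C$.
   Context: The potentials are sparse pattern-based: $\theta_C(\vec x_C)=\hat\theta_{C,\vec d}$ if $\vec x_C=\vec d\in\mathcal D_C$ and $0$ otherwise, and the energy is $E(\vec x)=\sum_{C}\theta_C(\vec x_C)$. A labeling $\vec p\in\mathcal P^C$ is a map $C\to\mathcal P$ with value $p_\ell$ at $\ell\in C$. $D$ is the Lagrangian dual of the submodular relaxation obtained by relaxing the consistency constraints $\sum_p y_{ip}=1$. *)

(* Defs.v *)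
From mathcomp Require Import all_boot all_order all_algebra.
Set Implicit Arguments. Unset Strict Implicit. Unset Printing Implicit Defensive.
Import Order.TTheory GRing.Theory Num.Theory.
Local Open Scope ring_scope.

Section Defs.
Variables (R : realFieldType) (V P : finType).

Definition lab (C : {set V}) : finType := {ffun {x : V | x \in C} -> P}.

Definition ybin := {ffun V * P -> bool}.
(* binary variables z_{C,d} (indexed by all C; only C in Cs matter) *)
Definition zbin := {dffun forall C : {set V}, {ffun lab C -> bool}}.

Variables (Cs : {set {set V}}) (Dc : forall C : {set V}, {set lab C})
          (theta : forall C : {set V}, lab C -> R).

Definition EstarI (y : ybin) (z : zbin) : R :=
  - \sum_(C in Cs) \sum_(d in Dc C)
      theta d * ((#|C|%:R - 1) * (z C d)%:R
                 - \sum_(l : {x : V | x \in C}) (y (val l, d l))%:R * (z C d)%:R).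

Definition Lag (lam : V -> R) (y : ybin) (z : zbin) : R :=
  EstarI y z + \sum_(i : V) lam i * (\sum_(p : P) (y (i, p))%:R - 1).

Definition y0 : ybin := [ffun _ => false].
Definition z0 : zbin := [ffun C => [ffun _ => false]].

(* D(lambda) = min over binary y, z of the Lagrangian (finite minimum;
   the seed value is itself one of the minimized terms) *)
Definition Ddual (lam : V -> R) : R :=
  \big[Num.min/Lag lam y0 z0]_(y : ybin) \big[Num.min/Lag lam y0 z0]_(z : zbin)
     Lag lam y z.

Definition LP_feasible (yv : V -> P -> R) (yc : forall C : {set V}, lab C -> R) : Prop :=
  (forall i p, 0 <= yv i p <= 1) /\
  (forall C, C \in Cs -> forall p : lab C, 0 <= yc C p <= 1) /\
  (forall C, C \in Cs -> forall d, d \in Dc C ->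
     forall l : {x : V | x \in C}, yc C d <= yv (val l) (d l)) /\
  (forall i, \sum_(p : P) yv i p = 1) /\
  (forall C, C \in Cs -> forall (p0 : P) (l : {x : V | x \in C}),
     \sum_(p : lab C | p l == p0) yc C p = yv (val l) p0).

Definition LP_obj (yc : forall C : {set V}, lab C -> R) : R :=
  \sum_(C in Cs) \sum_(d in Dc C) theta d * yc C d.

End Defs.

(* Main.v *)
Require Import Defs.
From mathcomp Require Import all_boot all_order all_algebra.
From mathcomp Require Import ring lra.
Set Implicit Arguments. Unset Strict Implicit. Unset Printing Implicit Defensive.
Import Order.TTheory GRing.Theory Num.Theory.
Local Open Scope ring_scope.

Section Farkas.
Variable R : realFieldType.

Definition fm_g (I : finType) (al g : I -> R) (x : I + I * I) : R :=
  match x with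
  | inl i => if al i == 0 then g i else 0
  | inr (i, j) => if (0 < al i) && (al j < 0) then - al j * g i + al i * g j else 0
  end.

Definition cmap (I : finType) (al : I -> R) (c' : I + I * I -> R) (i : I) : R :=
  (if al i == 0 then c' (inl i) else 0)
  + \sum_j (if (0 < al i) && (al j < 0) then c' (inr (i, j)) * - al j else 0)
  + \sum_j (if (0 < al j) && (al i < 0) then c' (inr (j, i)) * al j else 0).

Lemma cmap_comb (I : finType) (al g : I -> R) (c' : I + I * I -> R) :
  \sum_i cmap al c' i * g i = \sum_x c' x * fm_g al g x.
Proof.
rewrite big_sumType /=.
have -> : \sum_(p : I * I) c' (inr p) * fm_g al g (inr p) =
  \sum_i \sum_j c' (inr (i, j)) * fm_g al g (inr (i, j)).
  by rewrite pair_bigA; apply: eq_bigr => -[].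
rewrite /cmap.
under eq_bigr do rewrite !mulrDl.
rewrite !big_split /= -addrA; congr (_ + _).
  by apply: eq_bigr => i _; case: ifP => _; rewrite ?mul0r ?mulr0.
under [X in X + _]eq_bigr do rewrite mulr_suml.
under [X in _ + X]eq_bigr do rewrite mulr_suml.
rewrite [X in _ + X]exchange_big /= -big_split /=.
apply: eq_bigr => i _; rewrite -big_split /=; apply: eq_bigr => j _.
case: ifP => _; last by rewrite !mul0r addr0 mulr0.
rewrite mulrDr; congr (_ + _); ring.
Qed.

Lemma cmap_ge0 (I : finType) (al : I -> R) (c' : I + I * I -> R) :
  (forall x, 0 <= c' x) -> forall i, 0 <= cmap al c' i.
Proof.
move=> h i; rewrite /cmap; apply: addr_ge0; [apply: addr_ge0|].
- by case: ifP.
- apply: sumr_ge0 => j _; case: ifP => // /andP[_ ]; rewrite -oppr_gt0 => hj.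
  by apply: mulr_ge0 => //; apply: ltW.
- apply: sumr_ge0 => j _; case: ifP => // /andP[hj _].
  by apply: mulr_ge0 => //; apply: ltW.
Qed.

End Farkas.
Section F.
Variable R : realFieldType.
Lemma pair_aux (p q A B : R) : 0 < p -> 0 < q -> p * A <= q * B -> A / q <= B / p.
Proof.
move=> hp hq h; rewrite ler_pdivlMr // mulrAC ler_pdivrMr //.
by rewrite mulrC [B * q]mulrC.
Qed.

Lemma fm_g_lin (I : finType) m (al : I -> R) (f : I -> 'I_m -> R) (y : 'I_m -> R) x :
  \sum_k fm_g al (fun i => f i k) x * y k = fm_g al (fun i => \sum_k f i k * y k) x.
Proof.
case: x => [i|[i j]] /=; case: ifP => _ //;
  try by rewrite big1 // => k _; rewrite mul0r.
under eq_bigr do rewrite mulrDl -!mulrA.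
by rewrite big_split -!mulr_sumr.
Qed.

Lemma farkas_ord n : forall (I : finType) (a : I -> 'I_n -> R) (b : I -> R),
  (exists x : 'I_n -> R, forall i, \sum_k a i k * x k <= b i) \/
  (exists c : I -> R, (forall i, 0 <= c i) /\ (forall k, \sum_i c i * a i k = 0)
      /\ \sum_i c i * b i < 0).
Proof.
elim: n => [|n IH] I a b.
  case: (boolP [forall i, 0 <= b i]) => [/forallP h|].
    by left; exists (fun _ => 0) => i; rewrite big_ord0; exact: h.
  rewrite negb_forall => /existsP [i0]; rewrite -ltNge => hi0.
  right; exists (fun i => (i == i0)%:R); split; first by move=> i; rewrite ler0n.
  split; first by case.
  rewrite (bigD1 i0) //= eqxx mul1r big1 ?addr0 // => i /negbTE ->; by rewrite mul0r.
pose al := fun i => a i ord_max.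
have [[x' hx']|[c' [hc0 [hca hcb]]]] :=
  IH _ (fun x k => fm_g al (fun i => a i (lift ord_max k)) x) (fm_g al b).
- left.
  pose S := fun i => \sum_k a i (lift ord_max k) * x' k.
  have hx : forall x, fm_g al S x <= fm_g al b x.
    by move=> x; rewrite -fm_g_lin; exact: hx'.
  pose U := fun i => (b i - S i) / al i.
  pose T := \big[Num.max/0]_(j | al j < 0) U j.
  pose t := \big[Num.min/T]_(i | 0 < al i) U i.
  exists (fun k => if unlift ord_max k is Some k' then x' k' else t) => i.
  rewrite big_ord_recr /= unlift_none.
  have -> : \sum_(k < n) a i (widen_ord (leqnSn n) k) *
     (if unlift ord_max (widen_ord (leqnSn n) k) is Some k' then x' k' else t) = S i.
    apply: eq_bigr => k _.
    have -> : widen_ord (leqnSn n) k = lift ord_max k by apply: val_inj; rewrite /= /bump leqNgt ltn_ord.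
    by rewrite liftK.
  have ealU : forall j, al j != 0 -> al j * U j = b j - S j.
    by move=> j hj; rewrite /U mulrC divfK.
  case: (ltrgtP (al i) 0) => hal.
  +
    have hL : U i <= t.
      apply: le_bigmin; first by apply: le_bigmax_cond.
      move=> j hj; have := hx (inr (j, i)); rewrite /= hj hal /=.
      move=> h; rewrite /U.
      have -> : (b i - S i) / al i = (S i - b i) / (- al i).
        by rewrite invrN mulrN -mulNr opprB.
      apply: pair_aux => //; first by rewrite oppr_gt0.
      lra.
    have : al i * t <= al i * U i by rewrite ler_wnM2l // ltW.
    rewrite ealU; first by rewrite -/(al i); lra.
    by rewrite lt_eqF.
  +
    have hU : t <= U i by apply: bigmin_le_cond.
    have : al i * t <= al i * U i by rewrite ler_wpM2l // ltW.
    rewrite ealU ?gt_eqF // -/(al i); lra.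
  + have := hx (inl i); rewrite /= hal eqxx /= -/(al i) hal mul0r addr0 => h; exact: h.
- right; exists (cmap al c'); split; first exact: cmap_ge0.
  split; last by rewrite cmap_comb.
  move=> k; case: (unliftP ord_max k) => [k0 ->|->].
    by rewrite (cmap_comb al (fun i => a i (lift ord_max k0))); exact: hca.
  rewrite (cmap_comb al al) big1 // => -[i|[i j]] _ /=; case: ifP => [|_]; rewrite ?mulr0 //.
    by move=> /eqP ->; rewrite mulr0.
  move=> _; match goal with |- _ * ?e = 0 => have -> : e = 0 by rewrite /al; ring end; by rewrite mulr0.
Qed.
End F.
Section SD.
Variable R : realFieldType.

Lemma farkas (I W : finType) (a : I -> W -> R) (b : I -> R) :
  (exists x : W -> R, forall i, \sum_k a i k * x k <= b i) \/
  (exists c : I -> R, (forall i, 0 <= c i) /\ (forall k, \sum_i c i * a i k = 0)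
      /\ \sum_i c i * b i < 0).
Proof.
have hre : forall F : W -> R, \sum_k F k = \sum_(k' < #|W|) F (enum_val k').
  move=> F; rewrite (reindex (fun k : 'I_#|W| => enum_val k)) //.
  by apply: onW_bij; exact: enum_val_bij.
have [[x' hx']|[c [hc0 [hca hcb]]]] := farkas_ord (fun i (k : 'I_#|W|) => a i (enum_val k)) b.
- left; exists (fun k => x' (enum_rank k)) => i.
  rewrite hre; under eq_bigr do rewrite enum_valK; exact: hx'.
- right; exists c; split => //; split => // k.
  by rewrite -(enum_rankK k); exact: hca.
Qed.

Lemma sum_sumT (I1 I2 : finType) (F : I1 + I2 -> R) :
  \sum_x F x = \sum_i F (inl i) + \sum_j F (inr j).
Proof. by rewrite big_sumType. Qed.

Lemma big0m (T : finType) (f : T -> R) : \sum_i 0 * f i = 0.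
Proof. by rewrite big1 // => i _; rewrite mul0r. Qed.
Lemma big0r (T : finType) (f : T -> R) : \sum_i f i * 0 = 0.
Proof. by rewrite big1 // => i _; rewrite mulr0. Qed.

Lemma sum_unit (F : unit -> R) : \sum_(u : unit) F u = F tt.
Proof. by rewrite (eq_bigl (fun u => u == tt)) ?big_pred1_eq // => -[]. Qed.

Definition Idx (I J : finType) := (((I + I) + (J + J)) + unit)%type.

Definition arow (I J : finType) (A : I -> J -> R) (b : I -> R) (c : J -> R)
   (r : Idx I J) (w : J + I) : R :=
  match r, w with
  | inl (inl (inl i)), inl j => A i j
  | inl (inl (inr i)), inr i' => - (i' == i)%:R
  | inl (inr (inl j)), inr i => A i j
  | inl (inr (inr j)), inr i => - A i j
  | inr _, inl j => - c j
  | inr _, inr i => b i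
  | _, _ => 0
  end.

Definition brow (I J : finType) (b : I -> R) (c : J -> R) (r : Idx I J) : R :=
  match r with
  | inl (inl (inl i)) => b i
  | inl (inl (inr _)) => 0
  | inl (inr (inl j)) => c j
  | inl (inr (inr j)) => - c j
  | inr _ => 0
  end.

Lemma sum_Idx (I J : finType) (F : Idx I J -> R) :
  \sum_r F r = \sum_i F (inl (inl (inl i))) + \sum_i F (inl (inl (inr i)))
    + \sum_j F (inl (inr (inl j))) + \sum_j F (inl (inr (inr j))) + F (inr tt).
Proof.
rewrite !sum_sumT sum_unit.
transitivity ((\sum_i F (inl (inl (inl i))) + \sum_i F (inl (inl (inr i))))
    + (\sum_j F (inl (inr (inl j))) + \sum_j F (inl (inr (inr j)))) + F (inr tt)).
  by [].
by rewrite !addrA.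
Qed.

Lemma sum_pick (I : finType) (q : I -> R) k : \sum_i q i * - (k == i)%:R = - q k.
Proof.
rewrite (bigD1 k) //= eqxx mulrN1 big1 ?addr0 // => i hi.
by rewrite eq_sym (negbTE hi) oppr0 mulr0.
Qed.

Lemma sum_pick' (I : finType) (q : I -> R) k : \sum_i q i * - (i == k)%:R = - q k.
Proof. by rewrite -(sum_pick q k); apply: eq_bigr => i _; rewrite eq_sym. Qed.

Lemma sum_pickl (I : finType) (q : I -> R) k : \sum_i - (i == k)%:R * q i = - q k.
Proof. by rewrite -(sum_pick' q k); apply: eq_bigr => i _; rewrite mulrC. Qed.

Lemma strong_duality (I J : finType) (A : I -> J -> R) (b : I -> R) (c : J -> R) :
  (exists z, forall i, \sum_j A i j * z j <= b i) ->
  (exists y, (forall i, 0 <= y i) /\ forall j, \sum_i y i * A i j = c j) ->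
  exists z y, (forall i, \sum_j A i j * z j <= b i) /\ (forall i, 0 <= y i) /\
     (forall j, \sum_i y i * A i j = c j) /\ \sum_i y i * b i <= \sum_j c j * z j.
Proof.
move=> [z0 hz0] [y0 [hy0 hy0c]].
have [[x hx]|[cf [hc0 [hca hcb]]]] := farkas (arow A b c) (brow b c).
- exists (fun j => x (inl j)), (fun i => x (inr i)).
  have hxr := hx; split.
    move=> i; have := hx (inl (inl (inl i))); rewrite sum_sumT /=.
    by rewrite big0m addr0.
  split.
    move=> i; have := hx (inl (inl (inr i))); rewrite sum_sumT /= big0m add0r.
    by rewrite sum_pickl oppr_le0.
  split.
    move=> j; apply: le_anti; apply/andP; split.
      have := hx (inl (inr (inl j))); rewrite sum_sumT /= big0m add0r.
      by under eq_bigr do rewrite mulrC.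
    have := hx (inl (inr (inr j))); rewrite sum_sumT /= big0m add0r.
    under eq_bigr do rewrite mulNr; rewrite sumrN lerN2 => h.
    by under eq_bigr do rewrite mulrC.
  have := hx (inr tt); rewrite sum_sumT /=.
  under eq_bigr do rewrite mulNr; rewrite sumrN.
  under [X in _ + X <= _]eq_bigr do rewrite mulrC.
  lra.
- pose p i := cf (inl (inl (inl i))); pose q i := cf (inl (inl (inr i)));
  pose r j := cf (inl (inr (inl j))); pose r' j := cf (inl (inr (inr j)));
  pose s := cf (inr tt).
  have Ez : forall j, \sum_i p i * A i j - s * c j = 0.
    move=> j; have := hca (inl j); rewrite sum_Idx /=.
    by rewrite !big0r !addr0 mulrN.
  have Ey : forall i, - q i + \sum_j (r j - r' j) * A i j + s * b i = 0.
    move=> i; have := hca (inr i); rewrite sum_Idx /= big0r add0r.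
    rewrite sum_pick.
    under [X in _ + _ + X + _]eq_bigr do rewrite mulrN.
    rewrite sumrN => h.
    have -> : \sum_j (r j - r' j) * A i j = \sum_j r j * A i j - \sum_j r' j * A i j.
      by rewrite -sumrB; apply: eq_bigr => j _; rewrite mulrBl.
    rewrite /q /r /r' /s; lra.
  have Eb : \sum_i p i * b i + \sum_j (r j - r' j) * c j < 0.
    move: hcb; rewrite sum_Idx /= big0r addr0.
    under [X in _ + _ + X + _]eq_bigr do rewrite mulrN.
    rewrite sumrN mulr0 addr0 => h.
    have -> : \sum_j (r j - r' j) * c j = \sum_j r j * c j - \sum_j r' j * c j.
      by rewrite -sumrB; apply: eq_bigr => j _; rewrite mulrBl.
    rewrite /p /r /r'; lra.
  have hs : 0 <= s by apply: hc0.
  pose G i := \sum_j (r j - r' j) * A i j.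
  have EG : forall i, G i = q i - s * b i by move=> i; have := Ey i; rewrite -/(G i); lra.
  case: (ltrgtP s 0) => [hsn|hsp|hs0]; first by move: hs; rewrite leNgt hsn.
  + exists (fun j => (r j - r' j) * (- s^-1)), (fun i => p i * s^-1).
    split.
      move=> i; under eq_bigr do rewrite mulrA [A i _ * _]mulrC.
      rewrite -mulr_suml -/(G i) EG mulrN mulrBl mulrAC divff ?gt_eqF // mul1r.
      have hq : 0 <= q i by apply: hc0.
      have : 0 <= q i / s by apply: divr_ge0 => //; exact: ltW.
      lra.
    split; first by move=> i; apply: divr_ge0; [apply: hc0 | exact: ltW].
    split.
      move=> j; under eq_bigr do rewrite mulrAC.
      rewrite -mulr_suml; have := Ez j => h.
      have -> : \sum_i p i * A i j = s * c j by lra.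
      by rewrite mulrAC divff ?gt_eqF // mul1r.
    under eq_bigr do rewrite mulrAC.
    under [X in _ <= X]eq_bigr do rewrite mulrA [c _ * _]mulrC.
    rewrite -!mulr_suml mulrN -mulNr.
    rewrite ler_pM2r ?invr_gt0 //.
    lra.
  + exfalso.
    have h1 : 0 <= \sum_i p i * b i.
      apply: le_trans (_ : \sum_i p i * \sum_j A i j * z0 j <= _).
        rewrite (eq_bigr (fun i => \sum_j p i * A i j * z0 j)); last first.
          by move=> i _; rewrite mulr_sumr; apply: eq_bigr => j _; rewrite mulrA.
        rewrite exchange_big /= big1 // => j _.
        by rewrite -mulr_suml; have := Ez j; rewrite hs0 mul0r subr0 => ->; rewrite mul0r.
      by apply: ler_sum => i _; apply: ler_wpM2l => //; apply: hc0.
    have h2 : 0 <= \sum_j (r j - r' j) * c j.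
      rewrite (eq_bigr (fun j => \sum_i (r j - r' j) * (y0 i * A i j))); last first.
        by move=> j _; rewrite -hy0c mulr_sumr.
      rewrite exchange_big /=.
      apply: sumr_ge0 => i _.
      rewrite (eq_bigr (fun j => y0 i * ((r j - r' j) * A i j))); last first.
        by move=> j _; rewrite mulrCA.
      rewrite -mulr_sumr -/(G i) EG hs0 mul0r subr0.
      by apply: mulr_ge0 => //; apply: hc0.
    lra.
Qed.
End SD.

Section Thr.
Variable R : realFieldType.

Fixpoint mkts (x0 : R) (s : seq R) : seq (R * R) :=
  if s is v :: s' then (v - x0, v) :: mkts v s' else [::].

Lemma mkts_mem x0 s p : p \in mkts x0 s -> p.2 \in s.
Proof.
elim: s x0 => [|v s IH] x0 //=; rewrite inE => /orP[/eqP -> /=|/IH h].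
  by rewrite inE eqxx.
by rewrite inE h orbT.
Qed.

Lemma mkts_ge0 x0 s p : path <%R x0 s -> p \in mkts x0 s -> 0 <= p.1.
Proof.
elim: s x0 => [|v s IH] x0 //= /andP[hv hp]; rewrite inE => /orP[/eqP -> /=|/(IH _ hp) //].
by rewrite subr_ge0 ltW.
Qed.

Lemma mkts_ind (a : R) s x0 : path <%R x0 s -> x0 <= a -> a \in x0 :: s ->
  \sum_(p <- mkts x0 s) p.1 * ((p.2 <= a)%R)%:R = a - x0.
Proof.
elim: s x0 => [|v s IH] x0 /=.
  by move=> _ _; rewrite inE => /eqP ->; rewrite big_nil subrr.
move=> /andP[hv hp] hx0 ha; rewrite big_cons /=.
case: (leP v a) => hva.
  rewrite mulr1 IH //; first lra.
  move: ha; rewrite inE => /orP[/eqP ea|//]; exfalso; lra.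
have ea : a = x0.
  move: ha; rewrite inE => /orP[/eqP //|]; rewrite inE => /orP[/eqP ea|hin]; first lra.
  have := order_path_min (@lt_trans _ _) hp; move=> /allP /(_ _ hin); lra.
rewrite mulr0 add0r big1_seq; first by rewrite ea subrr.
move=> p /andP[_ hin].
have hin2 := mkts_mem hin.
have := order_path_min (@lt_trans _ _) hp; move=> /allP /(_ _ hin2) hvp.
have : ~~ (p.2 <= a) by rewrite -ltNge; lra.
by move=> /negbTE ->; rewrite mulr0.
Qed.

Lemma tdecomp (vals : seq R) : all (fun a => 0 <= a <= 1) vals ->
  exists ts : seq (R * R), (forall p, p \in ts -> 0 <= p.1) /\
    \sum_(p <- ts) p.1 = 1 /\
    forall a, a \in vals -> \sum_(p <- ts) p.1 * ((p.2 <= a)%R)%:R = a.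
Proof.
move=> /allP hv.
pose s := sort <=%R (undup (1 :: [seq a <- vals | 0 < a])).
have hs : forall y, y \in s -> 0 < y <= 1.
  move=> y; rewrite mem_sort mem_undup inE => /orP[/eqP ->|]; first by rewrite ltr01 lexx.
  by rewrite mem_filter => /andP[-> /hv /andP[]].
have hpath : path <%R 0 s.
  rewrite path_sortedE; last exact: lt_trans.
  rewrite sort_lt_sorted undup_uniq andbT; apply/allP => y /hs /andP[] //.
exists (mkts 0 s); split; first by move=> p; apply: mkts_ge0.
have key : forall a, 0 <= a -> a \in 0 :: s ->
    \sum_(p <- mkts 0 s) p.1 * ((p.2 <= a)%R)%:R = a.
  by move=> a ha hin; rewrite mkts_ind // subr0.
split.
  rewrite -[RHS](key 1) ?ler01 //; last first.
    by rewrite inE mem_sort mem_undup inE eqxx orbT.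
  apply: eq_big_seq => p /mkts_mem /hs /andP[_ ->]; by rewrite mulr1.
move=> a ha; have /andP[ha0 ha1] := hv a ha; apply: key => //.
rewrite inE; case: (eqVneq a 0) => //= h.
rewrite mem_sort mem_undup inE mem_filter ha andbT lt_def h ha0 /=; by rewrite orbT.
Qed.
End Thr.

Section Main.
Variables (R : realFieldType) (V P : finType).
Variables (Cs : {set {set V}}) (Dc : forall C : {set V}, {set lab P C})
          (theta : forall C : {set V}, lab P C -> R).

Definition mn (x : V -> P -> R) (C : {set V}) (d : lab P C) : R :=
  \big[Num.min/1]_(l : {x : V | x \in C}) x (val l) (d l).

Definition Fx (x : V -> P -> R) : R :=
  \sum_(C in Cs) \sum_(d in Dc C) @theta C d * mn x d.

Definition simp (x : V -> P -> R) : Prop :=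
  (forall i p, 0 <= x i p) /\ (forall i, \sum_p x i p = 1).

Hypothesis Hth : forall C, C \in Cs -> forall d, d \in Dc C -> @theta C d <= 0.

Lemma partB yv yc : LP_feasible Cs Dc yv yc -> Fx yv <= LP_obj Cs Dc theta yc.
Proof.
move=> [h01 [hc01 [hle _]]].
apply: ler_sum => C hC; apply: ler_sum => d hd.
apply: ler_wnM2l; first exact: Hth.
apply: le_bigmin; first by have /andP[] := hc01 C hC d.
by move=> l _; apply: hle.
Qed.

Lemma x_le1 x : simp x -> forall i p, x i p <= 1.
Proof.
move=> [h0 h1] i p; rewrite -(h1 i) (bigD1 p) //= lerDl.
by apply: sumr_ge0 => q _; apply: h0.
Qed.

Lemma mn_le x C (d : lab P C) l : mn x d <= x (val l) (d l).
Proof. exact: bigmin_le. Qed.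

Lemma mn_01 x : simp x -> forall C (d : lab P C), 0 <= mn x d <= 1.
Proof.
move=> hx C d; rewrite bigmin_le_id andbT.
by apply: le_bigmin => // l _; case: hx => h0 _; apply: h0.
Qed.

Lemma Dd_le lam y z : Ddual Cs Dc theta lam <= Lag Cs Dc theta lam y z.
Proof.
rewrite /Ddual; set L0 := Lag _ _ _ _ _ _.
have h1 := bigmin_le L0 y (fun y => \big[Num.min/L0]_(z : zbin V P) Lag Cs Dc theta lam y z).
apply: le_trans h1 _.
exact: bigmin_le.
Qed.

Definition yt (x : V -> P -> R) (t : R) : ybin V P := [ffun ip => (t <= x ip.1 ip.2)%R].
Definition zt (x : V -> P -> R) (t : R) : zbin V P := [ffun C => [ffun d => (t <= mn x d)%R]].

Lemma Lag_thr lam x t : Lag Cs Dc theta lam (yt x t) (zt x t) =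
  \sum_(C in Cs) \sum_(d in Dc C) @theta C d * ((t <= mn x d)%R)%:R
  + \sum_i lam i * (\sum_p ((t <= x i p)%R)%:R - 1).
Proof.
rewrite /Lag /EstarI; congr (_ + _); last first.
  by apply: eq_bigr => i _; congr (_ * (_ - _)); apply: eq_bigr => p _; rewrite ffunE.
rewrite -sumrN; apply: eq_bigr => C hC; rewrite -sumrN; apply: eq_bigr => d hd.
rewrite !ffunE; case: (boolP (t <= mn x d)%R) => h; last first.
  rewrite !mulr0 big1 ?subr0 ?mulr0 ?oppr0 // => l _; by rewrite mulr0.
rewrite mulr1.
rewrite (eq_bigr (fun _ => 1)); last first.
  move=> l _; rewrite ffunE /= mulr1.
  by rewrite (le_trans h (mn_le x d l)).
rewrite sumr_const card_sig.
have -> : #|[pred x0 | x0 \in C]| = #|C| by apply: eq_card.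
rewrite -mulrN; congr (_ * _); rewrite /= mulr1n; lra.
Qed.

Lemma partA lam x : simp x -> Ddual Cs Dc theta lam <= Fx x.
Proof.
move=> hx.
pose K := {C : {set V} & lab P C}.
pose vals := [seq x ip.1 ip.2 | ip <- enum {: V * P}] ++
             [seq mn x (tagged k) | k <- enum {: K}].
have hvals : all (fun a => 0 <= a <= 1) vals.
  apply/allP => a; rewrite mem_cat => /orP[] /mapP [k _ ->].
    by have h1 := x_le1 hx; case: hx => h0 _; rewrite h0 h1.
  exact: mn_01.
have [ts [hts0 [hts1 htsa]]] := tdecomp hvals.
have hxa : forall i p, \sum_(q <- ts) q.1 * ((q.2 <= x i p)%R)%:R = x i p.
  move=> i p; apply: htsa; rewrite mem_cat; apply/orP; left.
  by apply/mapP; exists (i, p); rewrite ?mem_enum.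
have hma : forall C (d : lab P C), \sum_(q <- ts) q.1 * ((q.2 <= mn x d)%R)%:R = mn x d.
  move=> C d; apply: htsa; rewrite mem_cat; apply/orP; right.
  by apply/mapP; exists (Tagged (fun C => lab P C) d); rewrite ?mem_enum.
have -> : Ddual Cs Dc theta lam = \sum_(q <- ts) q.1 * Ddual Cs Dc theta lam.
  by rewrite -mulr_suml hts1 mul1r.
have E1 : \sum_(q <- ts) q.1 * (\sum_(C in Cs) \sum_(d in Dc C)
     @theta C d * ((q.2 <= mn x d)%R)%:R) = Fx x.
  under eq_bigr do rewrite mulr_sumr.
  rewrite exchange_big; apply: eq_bigr => C hC.
  under eq_bigr do rewrite mulr_sumr.
  rewrite exchange_big; apply: eq_bigr => d hd.
  rewrite -[X in _ = _ * X](hma C d) mulr_sumr; apply: eq_bigr => q _.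
  by rewrite mulrCA.
have E2 : \sum_(q <- ts) q.1 * (\sum_i lam i * (\sum_p ((q.2 <= x i p)%R)%:R - 1)) = 0.
  under eq_bigr do rewrite mulr_sumr.
  rewrite exchange_big big1 // => i _.
  under eq_bigr do rewrite mulrCA.
  rewrite -mulr_sumr.
  under eq_bigr do rewrite mulrBr mulr1.
  rewrite sumrB hts1.
  under eq_bigr do rewrite mulr_sumr.
  rewrite exchange_big /=.
  under eq_bigr do rewrite hxa.
  by case: hx => _ ->; rewrite subrr mulr0.
have -> : Fx x = \sum_(q <- ts) q.1 * Lag Cs Dc theta lam (yt x q.2) (zt x q.2).
  under eq_bigr do rewrite Lag_thr mulrDr.
  rewrite big_split E1 E2; exact: (esym (addr0 _)).
rewrite big_seq [X in _ <= X]big_seq; apply: ler_sum => q hq; apply: ler_wpM2l; first exact: hts0.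
exact: Dd_le.
Qed.

End Main.

Section PC.
Variables (R : realFieldType) (V P : finType).

Lemma prod_sum (L : finType) (f : L -> P -> R) (l : L) (q : P) :
  \sum_(p : {ffun L -> P} | p l == q) \prod_l' f l' (p l') =
  \prod_l' (if l' == l then f l q else \sum_q' f l' q').
Proof.
pose F := fun l' q' => if l' == l then (q' == q)%:R * f l' q' else f l' q'.
have e1 : \prod_l' (if l' == l then f l q else \sum_q' f l' q') = \prod_l' \sum_q' F l' q'.
  apply: eq_bigr => l' _; rewrite /F; case: (eqVneq l' l) => [->|//].
  by rewrite (bigD1 q) //= eqxx mul1r big1 ?addr0 // => q' hq'; rewrite (negbTE hq') mul0r.
rewrite e1 bigA_distr_bigA big_mkcond /=; apply: eq_bigr => p _.
rewrite (bigD1 l) //= [in RHS](bigD1 l) //= /F eqxx.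
have -> : \prod_(i | i != l) (if i == l then (p i == q)%:R * f i (p i) else f i (p i))
   = \prod_(i | i != l) f i (p i).
  by apply: eq_bigr => i hi; rewrite (negbTE hi).
by case: (p l == q); rewrite ?mul1r ?mul0r.
Qed.

Variables (Cs : {set {set V}}) (Dc : forall C : {set V}, {set lab P C})
          (theta : forall C : {set V}, lab P C -> R).
Variable x : V -> P -> R.
Hypothesis hx : simp x.
Hypothesis HC : forall C, C \in Cs -> C != set0.
Hypothesis Hpotts : forall C, C \in Cs -> forall d1 d2, d1 \in Dc C -> d2 \in Dc C -> d1 != d2 ->
     forall i : {x : V | x \in C}, d1 i != d2 i.

Definition Sm (C : {set V}) (l : {x : V | x \in C}) q := \sum_(d in Dc C | d l == q) mn x d.
Definition rr (C : {set V}) (l : {x : V | x \in C}) q := x (val l) q - Sm l q.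
Definition MM (C : {set V}) := 1 - \sum_(d in Dc C) mn x d.
Definition prodt (C : {set V}) (p : lab P C) : R :=
  if MM C == 0 then 0 else MM C * \prod_l (rr l (p l) / MM C).
Definition ycC (C : {set V}) (p : lab P C) : R := (if p \in Dc C then mn x p else 0) + prodt p.

Section OneC.
Variable C : {set V}.
Hypothesis hC : C \in Cs.

Lemma Sm_pick (d0 : lab P C) l : d0 \in Dc C -> Sm l (d0 l) = mn x d0.
Proof.
move=> hd0; rewrite /Sm (big_pred1 d0) // => d /=.
case: (eqVneq d d0) => [->|hne]; first by rewrite hd0 eqxx.
case: (boolP (d \in Dc C)) => //= hd.
by apply/negbTE; apply: Hpotts.
Qed.

Lemma Sm_le (l : {x : V | x \in C}) q : Sm l q <= x (val l) q.
Proof.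
case: (pickP (fun d : lab P C => (d \in Dc C) && (d l == q))) => [d0 /andP[hd0 /eqP <-]|h0].
  by rewrite Sm_pick //; apply: mn_le.
rewrite /Sm big_pred0 //; by case: hx => h _; apply: h.
Qed.

Lemma rr_ge0 (l : {x : V | x \in C}) q : 0 <= rr l q.
Proof. by rewrite /rr subr_ge0 Sm_le. Qed.

Lemma sum_rr (l : {x : V | x \in C}) : \sum_q rr l q = MM C.
Proof.
rewrite /rr sumrB; case: hx => _ -> ; congr (_ - _).
rewrite /Sm [RHS](partition_big (fun d : lab P C => d l) predT) //=.
Qed.

Lemma someL : exists l : {x : V | x \in C}, true.
Proof. by have /set0Pn [v hv] := HC hC; exists (exist _ v hv). Qed.

Lemma MM_ge0 : 0 <= MM C.
Proof.
have [l0 _] := someL; rewrite -(sum_rr l0); apply: sumr_ge0 => q _; exact: rr_ge0.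
Qed.

Lemma prodt_ge0 (p : lab P C) : 0 <= prodt p.
Proof.
rewrite /prodt; case: eqP => // hM.
apply: mulr_ge0; first exact: MM_ge0.
apply: prodr_ge0 => l _; apply: divr_ge0; [exact: rr_ge0 | exact: MM_ge0].
Qed.

Lemma ycC_ge0 (p : lab P C) : 0 <= ycC p.
Proof.
rewrite /ycC; apply: addr_ge0; last exact: prodt_ge0.
case: ifP => // _; apply: le_bigmin => // l _; by case: hx => h _; apply: h.
Qed.

Lemma marg (l : {x : V | x \in C}) q : \sum_(p : lab P C | p l == q) ycC p = x (val l) q.
Proof.
rewrite /ycC big_split /=.
have -> : \sum_(p : lab P C | p l == q) (if p \in Dc C then mn x p else 0) = Sm l q.
  rewrite /Sm big_mkcond [RHS]big_mkcond; apply: eq_bigr => p _.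
  by case: (p \in Dc C); case: (p l == q).
rewrite /prodt; case: eqP => hM.
  rewrite big1 // addr0.
  have : rr l q = 0.
    have h0 := sum_rr l; rewrite hM in h0.
    by apply: (psumr_eq0P (fun q _ => rr_ge0 l q) h0).
  rewrite /rr; lra.
rewrite -mulr_sumr (prod_sum (fun l' q' => rr l' q' / MM C)).
rewrite (bigD1 l) //= eqxx big1 ?mulr1.
  rewrite mulrC divfK; last by apply/eqP.
  rewrite /rr; lra.
move=> l' hl'; rewrite (negbTE hl') -mulr_suml sum_rr divff //; exact/eqP.
Qed.

Lemma ycC_D (d : lab P C) : d \in Dc C -> ycC d = mn x d.
Proof.
move=> hd; rewrite /ycC hd /prodt; case: eqP => hM; first by rewrite addr0.
have [l0 _] := someL.
have [i0 _ hi0] := @eq_bigmin _ _ {x : V | x \in C} 1 l0 xpredT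
   (fun l => x (val l) (d l)) isT (fun l _ => x_le1 hx _ _).
have -> : \prod_l (rr l (d l) / MM C) = 0.
  rewrite (bigD1 i0) //= /rr Sm_pick // -/(mn x d).
  by rewrite /mn hi0 subrr mul0r mul0r.
by rewrite mulr0 addr0.
Qed.

Lemma ycC_le (l : {x : V | x \in C}) (p : lab P C) : ycC p <= x (val l) (p l).
Proof.
rewrite -marg (bigD1 p) //= lerDl; apply: sumr_ge0 => p' _; exact: ycC_ge0.
Qed.
End OneC.

Lemma partC0 : exists yc, LP_feasible Cs Dc x yc /\ LP_obj Cs Dc theta yc = Fx Cs Dc theta x.
Proof.
exists ycC; split.
  split; first by move=> i p; case: (hx) => h _; rewrite h x_le1.
  split.
    move=> C hC p; rewrite ycC_ge0 //=.
    have [l0 _] := someL hC.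
    by apply: le_trans (ycC_le hC l0 p) _; apply: x_le1.
  split.
    by move=> C hC d hd l; apply: ycC_le.
  split; first by case: hx.
  by move=> C hC q l; apply: marg.
apply: eq_bigr => C hC; apply: eq_bigr => d hd; by rewrite ycC_D.
Qed.
End PC.

Section PD.
Variables (R : realFieldType) (V P : finType).
Variables (Cs : {set {set V}}) (Dc : forall C : {set V}, {set lab P C})
          (theta : forall C : {set V}, lab P C -> R).
Definition K := {C : {set V} & lab P C}.
Definition relk (k : K) := (tag k \in Cs) && (tagged k \in Dc (tag k)).
Definition wk (k : K) : R := if relk k then - @theta (tag k) (tagged k) else 0.

Lemma sumK (G : forall C, lab P C -> R) :
  \sum_(C in Cs) \sum_(d in Dc C) G C d = \sum_(k : K | relk k) G (tag k) (tagged k).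
Proof. by rewrite (sig_big_dep (fun C => C \in Cs) (fun C d => d \in Dc C) G). Qed.

Variable p0 : P.
Definition lb (k : K) (x : V) : P := odflt p0 (omap (tagged k) (insub x)).
Lemma lb_val (k : K) (l : {x | x \in tag k}) : lb k (val l) = tagged k l.
Proof. by rewrite /lb valK. Qed.
Lemma bs (k : K) (F : V -> R) : \sum_(l : {x | x \in tag k}) F (val l) = \sum_(i in tag k) F i.
Proof. by rewrite (big_sub (fun x => x \in tag k)). Qed.

Lemma EstarI_K y z : EstarI Cs Dc theta y z =
  \sum_(k | relk k) wk k * ((#|tag k|%:R - 1) * (z (tag k) (tagged k))%:R
     - \sum_(l : {x | x \in tag k}) (y (val l, tagged k l))%:R * (z (tag k) (tagged k))%:R).
Proof.
rewrite /EstarI (sumK (fun C d => @theta C d * ((#|C|%:R - 1) * (z C d)%:R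
   - \sum_(l : {x | x \in C}) (y (val l, d l))%:R * (z C d)%:R))).
rewrite -sumrN; apply: eq_bigr => k hk; by rewrite /wk hk mulNr.
Qed.

Definition load (al : K -> V -> R) (i : V) (p : P) : R :=
  \sum_(k : K) (if (i \in tag k) && (lb k i == p) then al k i else 0).

Lemma Lag_lower (al : K -> V -> R) (be : K -> R) (mu : V -> R) :
  (forall k, 0 <= wk k) ->
  (forall k i, 0 <= al k i) -> (forall k, 0 <= be k) ->
  (forall k, relk k -> wk k <= \sum_(i in tag k) al k i + be k) ->
  (forall i p, load al i p <= mu i) ->
  forall y z, - \sum_i mu i - \sum_k be k <= Lag Cs Dc theta mu y z.
Proof.
move=> hw0 hal0 hbe0 halw hload y z.
pose T (k : K) := \sum_(i in tag k) al k i * (y (i, lb k i))%:R.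
have hT0 : forall k, 0 <= T k.
  by move=> k; apply: sumr_ge0 => i _; apply: mulr_ge0 => //; rewrite ler0n.
have sa : \sum_(k : K) T k <= \sum_i mu i * \sum_p (y (i, p))%:R.
  rewrite /T (eq_bigr (fun k : K => \sum_i (if i \in tag k then al k i * (y (i, lb k i))%:R else 0)));
    last by move=> k _; rewrite big_mkcond.
  rewrite exchange_big; apply: ler_sum => i _.
  rewrite mulr_sumr.
  have e : forall k : K, (if i \in tag k then al k i * (y (i, lb k i))%:R else 0) =
     \sum_p (y (i, p))%:R * (if (i \in tag k) && (lb k i == p) then al k i else 0).
    move=> k; case: (boolP (i \in tag k)) => hik /=; last first.
      by rewrite big1 // => p _; rewrite mulr0.
    rewrite (bigD1 (lb k i)) //= eqxx big1 ?addr0; first by rewrite mulrC.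
    by move=> p hp; rewrite eq_sym (negbTE hp) mulr0.
  under eq_bigr do rewrite e.
  rewrite exchange_big; apply: ler_sum => p _.
  apply: (@le_trans _ _ ((y (i, p))%:R * load al i p)).
    by rewrite le_eqVlt; apply/orP; left; apply/eqP; rewrite /load mulr_sumr.
  rewrite mulrC; apply: ler_wpM2r; first by rewrite ler0n.
  exact: hload.
have sbe : \sum_(k | relk k) be k <= \sum_k be k.
  rewrite [X in _ <= X](bigID relk) /=.
  have : 0 <= \sum_(k | ~~ relk k) be k by apply: sumr_ge0.
  move: (\sum_(k | relk k) be k) (\sum_(k | ~~ relk k) be k) => a b h.
  by rewrite lerDl.
have sb : - \sum_(k | relk k) be k <= EstarI Cs Dc theta y z + \sum_(k : K) T k.
  have -> : \sum_(k : K) T k = \sum_(k | relk k) T k + \sum_(k | ~~ relk k) T k.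
    by rewrite (bigID relk).
  rewrite EstarI_K addrA -sumrN; apply: ler_wpDr.
    by apply: sumr_ge0 => k _; apply: hT0.
  rewrite -big_split; apply: ler_sum => k hk /=.
  have hw := halw k hk.
  have eT : T k = \sum_(l : {x | x \in tag k}) al k (val l) * (y (val l, tagged k l))%:R.
    by rewrite /T -bs; apply: eq_bigr => l _; rewrite lb_val.
  have ew : \sum_(i in tag k) al k i = \sum_(l : {x | x \in tag k}) al k (val l) by rewrite -bs.
  have hn : #|tag k|%:R = \sum_(l : {x | x \in tag k}) (1 : R).
    rewrite sumr_const card_sig; congr (_%:R); by apply: eq_card.
  have hwk0 := hw0 k; have hbk := hbe0 k.
  have hTk := hT0 k.
  rewrite eT in hTk *; case: (z (tag k) (tagged k)); last first.
    rewrite /= mulr0 big1 ?subr0 ?mulr0 ?add0r; last by move=> l _; rewrite mulr0.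
    lra.
  rewrite mulr1.
  under eq_bigr do rewrite mulr1.
  case: (boolP [forall l, y (val l, tagged k l)]) => hall.
    have ey : forall l : {x | x \in tag k}, y (val l, tagged k l) = true.
      by move=> l; move/forallP: hall => ->.
    under eq_bigr do rewrite ey.
    under [X in _ <= _ + X]eq_bigr do rewrite ey mulr1.
    rewrite -ew -hn; lra.
  move: hall; rewrite negb_forall => /existsP [l0 hl0].
  suff : 0 <= wk k * (#|tag k|%:R - 1 - \sum_l (y (val l, tagged k l))%:R) by lra.
  apply: mulr_ge0 => //.
  have e1 : \sum_(l : {x | x \in tag k}) (1 : R) = 1 + \sum_(l | l != l0) 1.
    by rewrite (bigD1 l0).
  have e2 : \sum_(l : {x | x \in tag k}) ((y (val l, tagged k l))%:R : R) =
      (y (val l0, tagged k l0))%:R + \sum_(l | l != l0) (y (val l, tagged k l))%:R.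
    by rewrite (bigD1 l0).
  rewrite hn e1 e2 (negbTE hl0) /=.
  have : \sum_(l | l != l0) ((y (val l, tagged k l))%:R : R) <= \sum_(l | l != l0) 1.
    by apply: ler_sum => l _; case: (y _); rewrite ?ler01 ?lexx.
  lra.
rewrite /Lag.
have -> : \sum_i mu i * (\sum_p (y (i, p))%:R - 1) =
   \sum_i mu i * \sum_p (y (i, p))%:R - \sum_i mu i.
  by rewrite -sumrB; apply: eq_bigr => i _; rewrite mulrBr mulr1.
lra.
Qed.

Definition Jt := ((V * P) + K)%type.
Definition Ix := ((((V * P) + V) + (V + (K * V))) + K)%type.

Definition Am (r : Ix) (j : Jt) : R :=
  match r with
  | inl (inl (inl ip)) => match j with inl ip' => - (ip == ip')%:R | inr _ => 0 end
  | inl (inl (inr i)) => match j with inl ip' => (i == ip'.1)%:R | inr _ => 0 end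
  | inl (inr (inl i)) => match j with inl ip' => - (i == ip'.1)%:R | inr _ => 0 end
  | inl (inr (inr (k, l))) =>
      if l \in tag k then
        match j with inl ip' => - ((l, lb k l) == ip')%:R | inr k' => (k == k')%:R end
      else 0
  | inr k => match j with inl _ => 0 | inr k' => (k == k')%:R end
  end.

Definition bm (r : Ix) : R :=
  match r with
  | inl (inl (inr _)) => 1
  | inl (inr (inl _)) => -1
  | inr _ => 1
  | _ => 0
  end.

Definition cm (j : Jt) : R := match j with inl _ => 0 | inr k => wk k end.

Lemma sum_VP (F : V * P -> R) : \sum_ip F ip = \sum_i \sum_p F (i, p).
Proof. by rewrite pair_bigA; apply: eq_bigr => -[]. Qed.

Lemma sum_KV (F : K * V -> R) : \sum_kl F kl = \sum_k \sum_l F (k, l).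
Proof. by rewrite pair_bigA; apply: eq_bigr => -[]. Qed.

Lemma sum_J (F : Jt -> R) : \sum_j F j = \sum_ip F (inl ip) + \sum_k F (inr k).
Proof. exact: sum_sumT. Qed.

Lemma sum_Ix (F : Ix -> R) : \sum_r F r =
  \sum_ip F (inl (inl (inl ip))) + \sum_i F (inl (inl (inr i)))
  + \sum_i F (inl (inr (inl i))) + \sum_kl F (inl (inr (inr kl))) + \sum_k F (inr k).
Proof.
rewrite !sum_sumT.
transitivity ((\sum_ip F (inl (inl (inl ip))) + \sum_i F (inl (inl (inr i))))
  + (\sum_i F (inl (inr (inl i))) + \sum_kl F (inl (inr (inr kl)))) + \sum_k F (inr k)).
  by [].
by rewrite !addrA.
Qed.

Lemma pickp (T : finType) (q : T -> R) k : \sum_i (k == i)%:R * q i = q k.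
Proof.
rewrite (bigD1 k) //= eqxx mul1r big1 ?addr0 // => i hi.
by rewrite eq_sym (negbTE hi) mul0r.
Qed.

Lemma pickn (T : finType) (q : T -> R) k : \sum_i - (k == i)%:R * q i = - q k.
Proof. by rewrite -(pickp q k) -sumrN; apply: eq_bigr => i _; rewrite mulNr. Qed.

Lemma pickp' (T : finType) (q : T -> R) k : \sum_i q i * (k == i)%:R = q k.
Proof. by rewrite -(pickp q k); apply: eq_bigr => i _; rewrite mulrC. Qed.

Lemma pickn' (T : finType) (q : T -> R) k : \sum_i q i * - (k == i)%:R = - q k.
Proof. by rewrite -(pickn q k); apply: eq_bigr => i _; rewrite mulrC. Qed.

Lemma sum0 (T : finType) (q : T -> R) : \sum_i 0 * q i = 0.
Proof. by rewrite big1 // => i _; rewrite mul0r. Qed.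
Lemma sum0' (T : finType) (q : T -> R) : \sum_i q i * 0 = 0.
Proof. by rewrite big1 // => i _; rewrite mulr0. Qed.

Lemma rs1 (z : Jt -> R) ip : \sum_j Am (inl (inl (inl ip))) j * z j = - z (inl ip).
Proof. by rewrite sum_J /= sum0 addr0 pickn. Qed.

Lemma rs2 (z : Jt -> R) i : \sum_j Am (inl (inl (inr i))) j * z j = \sum_p z (inl (i, p)).
Proof.
rewrite sum_J /= sum0 addr0 sum_VP /=.
under eq_bigr do rewrite -mulr_sumr.
by rewrite (pickp (fun i' => \sum_p z (inl (i', p)))).
Qed.


Lemma pickpl (T : finType) (q : T -> R) k : \sum_i q i * (i == k)%:R = q k.
Proof. by rewrite -(pickp' q k); apply: eq_bigr => i _; rewrite eq_sym. Qed.

Lemma rs3 (z : Jt -> R) i : \sum_j Am (inl (inr (inl i))) j * z j = - \sum_p z (inl (i, p)).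
Proof.
rewrite sum_J /= sum0 addr0 sum_VP /=.
under eq_bigr do rewrite -mulr_sumr.
by rewrite (pickn (fun i' => \sum_p z (inl (i', p)))).
Qed.

Lemma rs4 (z : Jt -> R) (k : K) (l : V) : l \in tag k ->
  \sum_j Am (inl (inr (inr (k, l)))) j * z j = - z (inl (l, lb k l)) + z (inr k).
Proof. by move=> hl; rewrite sum_J /= hl pickn pickp. Qed.

Lemma rs4' (z : Jt -> R) (k : K) (l : V) : l \notin tag k ->
  \sum_j Am (inl (inr (inr (k, l)))) j * z j = 0.
Proof. by move=> hl; rewrite sum_J /= (negbTE hl) !sum0 addr0. Qed.

Lemma rs5 (z : Jt -> R) (k : K) : \sum_j Am (inr k) j * z j = z (inr k).
Proof. by rewrite sum_J /= sum0 add0r pickp. Qed.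

Lemma cs1 (y : Ix -> R) i p : \sum_r y r * Am r (inl (i, p)) =
  - y (inl (inl (inl (i, p)))) + y (inl (inl (inr i))) - y (inl (inr (inl i)))
  - load (fun k l => y (inl (inr (inr (k, l))))) i p.
Proof.
rewrite sum_Ix /= sum0' addr0 sum_pick' pickpl sum_pick' sum_KV /=.
congr (_ + _); rewrite /load -sumrN; apply: eq_bigr => k _.
rewrite (bigD1 i) //= big1 ?addr0.
  case: (boolP (i \in tag k)) => hik /=; last by rewrite mulr0 oppr0.
  case: (eqVneq (lb k i) p) => [->|hne]; first by rewrite eqxx mulrN1.
  suff -> : ((i, lb k i) == (i, p)) = false by rewrite /= mulr0n ?oppr0 ?mulr0 ?oppr0.
  by rewrite xpair_eqE eqxx (negbTE hne).
move=> l hl; case: (l \in tag k); last by rewrite mulr0.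
by rewrite xpair_eqE (negbTE hl) /= mulr0n oppr0 mulr0.
Qed.

Lemma cs2 (y : Ix -> R) (k : K) : \sum_r y r * Am r (inr k) =
  \sum_(l in tag k) y (inl (inr (inr (k, l)))) + y (inr k).
Proof.
rewrite sum_Ix /= !sum0' !add0r pickpl sum_KV /=; congr (_ + _).
rewrite exchange_big /= [RHS]big_mkcond /=; apply: eq_bigr => l _.
rewrite (bigD1 k) //= eqxx big1 ?addr0.
  by case: (l \in tag k); rewrite ?mulr1 ?mulr0.
move=> k' hk'; case: (l \in tag k'); last by rewrite mulr0.
by rewrite (negbTE hk') mulr0.
Qed.


Hypothesis Hth : forall C, C \in Cs -> forall d, d \in Dc C -> @theta C d <= 0.

Lemma wk_ge0 k : 0 <= wk k.
Proof.
rewrite /wk; case: ifP => // /andP[h1 h2]; rewrite oppr_ge0; exact: Hth.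
Qed.

Lemma Dd_ge (mu : V -> R) m : (forall y z, m <= Lag Cs Dc theta mu y z) ->
  m <= Ddual Cs Dc theta mu.
Proof.
move=> h; rewrite /Ddual; apply: le_bigmin => [|y _]; first exact: h.
by apply: le_bigmin => [|z _]; apply: h.
Qed.

Hypothesis HP : (0 < #|P|)%N.

Lemma partD0 : exists x, simp x /\ exists mu, Fx Cs Dc theta x <= Ddual Cs Dc theta mu.
Proof.
have hP : (#|P|%:R : R) != 0 by rewrite pnatr_eq0 -lt0n.
pose z0 : Jt -> R := fun j => match j with inl _ => #|P|%:R^-1 | inr _ => 0 end.
pose y0 : Ix -> R := fun r => match r with inr k => wk k | _ => 0 end.
have hPpos : 0 < (#|P|%:R : R)^-1 by rewrite invr_gt0 ltr0n.
have natm : forall (c : R) n, c *+ n = c * n%:R by move=> c n; rewrite mulr_natr.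
have hz0 : forall r, \sum_j Am r j * z0 j <= bm r.
  case=> [[[ip|i]|[i|[k l]]]|k].
  - by rewrite rs1 /= oppr_le0 ltW.
  - rewrite rs2 /= sumr_const; change ((#|P|%:R : R)^-1 *+ #|P| <= 1).
    by rewrite [X in X <= _]natm mulVf.
  - rewrite rs3 /= sumr_const; change (- ((#|P|%:R : R)^-1 *+ #|P|) <= -1).
    by rewrite [X in - X <= _]natm mulVf.
  - case: (boolP (l \in tag k)) => hl; first by rewrite rs4 //= addr0 oppr_le0 ltW.
    by rewrite rs4'.
  - by rewrite rs5 /= ler01.
have hy0 : (forall r, 0 <= y0 r) /\ forall j, \sum_r y0 r * Am r j = cm j.
  split; first by case=> [[[?|?]|[?|[? ?]]]|k] //=; apply: wk_ge0.
  case=> [[i p]|k].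
    rewrite cs1 /= /load big1 ?subr0 ?oppr0 ?addr0 ?subr0 //.
    by move=> k _; case: ifP.
  by rewrite cs2 /= big1 ?add0r.
have [z [y [hz [hy0' [hyc hobj]]]]] := strong_duality (ex_intro _ z0 hz0) (ex_intro _ y0 hy0).
pose x := fun i p => z (inl (i, p)).
pose u := fun k => z (inr k).
pose mu := fun i => y (inl (inl (inr i))) - y (inl (inr (inl i))).
pose al := fun k l => y (inl (inr (inr (k, l)))).
pose be := fun k => y (inr k).
have hx : simp x.
  split.
    move=> i p; have := hz (inl (inl (inl (i, p)))); rewrite rs1 /= oppr_le0; exact.
  move=> i; apply: le_anti; apply/andP; split.
    by have := hz (inl (inl (inr i))); rewrite rs2.
  by have := hz (inl (inr (inl i))); rewrite rs3 /= lerN2.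
exists x; split => //; exists mu.
have hload : forall i p, load al i p <= mu i.
  move=> i p; have := hyc (inl (i, p)); rewrite cs1 /= => h.
  have := hy0' (inl (inl (inl (i, p)))); rewrite /mu /al; lra.
have halw : forall k, relk k -> wk k <= \sum_(i in tag k) al k i + be k.
  by move=> k _; have := hyc (inr k); rewrite cs2 /= => ->.
have hlow := Lag_lower wk_ge0 (fun k i => hy0' _) (fun k => hy0' _) halw hload.
have hby : \sum_r y r * bm r = \sum_i mu i + \sum_k be k.
  rewrite sum_Ix /= !sum0' add0r addr0 /mu sumrB.
  under eq_bigr do rewrite mulr1.
  under [X in _ + X + _ = _]eq_bigr do rewrite mulrN1.
  rewrite sumrN; congr (_ + _); apply: eq_bigr => k _; by rewrite mulr1.
have hcz : \sum_j cm j * z j = \sum_k wk k * u k.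
  by rewrite sum_J /= sum0 add0r.
have hu : forall k, relk k -> u k <= mn x (tagged k).
  move=> k _; apply: le_bigmin.
    by have := hz (inr k); rewrite rs5.
  move=> l _; have := hz (inl (inr (inr (k, val l)))); rewrite rs4 ?(valP l) //= lb_val.
  rewrite /x /u; lra.
apply: le_trans (Dd_ge hlow).
apply: (@le_trans _ _ (- \sum_k wk k * u k)); last by lra.
rewrite /Fx (sumK (fun C d => @theta C d * mn x d)).
have eS : \sum_k wk k * u k = \sum_(k | relk k) wk k * u k.
  rewrite [RHS]big_mkcond; apply: eq_bigr => k _; rewrite /wk.
  by case: (relk k); rewrite ?mul0r.
rewrite eS.
rewrite -sumrN; apply: ler_sum => k hk.
have -> : @theta (tag k) (tagged k) = - wk k by rewrite /wk hk opprK.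
rewrite mulNr -mulrN -[X in _ <= X]mulrN; apply: ler_wpM2l; first exact: wk_ge0.
by rewrite lerN2; apply: hu.
Qed.

End PD.

Theorem theorem6 (R : realFieldType) (V P : finType)
  (Cs : {set {set V}}) (Dc : forall C : {set V}, {set lab P C})
  (theta : forall C : {set V}, lab P C -> R) :
  (0 < #|P|)%N ->
  (forall C, C \in Cs -> C != set0) ->
  (forall C, C \in Cs -> forall d, d \in Dc C -> theta C d <= 0) ->
  (forall C, C \in Cs -> forall d1 d2, d1 \in Dc C -> d2 \in Dc C -> d1 != d2 ->
     forall i : {x : V | x \in C}, d1 i != d2 i) ->
  exists v : R,
    (* v is the optimal value of the LP *)
    ((exists yv yc, LP_feasible Cs Dc yv yc /\ LP_obj Cs Dc theta yc = v) /\
     (forall yv yc, LP_feasible Cs Dc yv yc -> v <= LP_obj Cs Dc theta yc)) /\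
    (* v is the maximum of D over lambda *)
    ((exists lam : V -> R, Ddual Cs Dc theta lam = v) /\
     (forall lam : V -> R, Ddual Cs Dc theta lam <= v)).
Proof.
move=> HP HC Hth Hpotts.
have [p0 _] : exists p0 : P, p0 \in P by apply/card_gt0P.
have [x [hx [mu hmu]]] := partD0 p0 Hth HP.
have eD : Ddual Cs Dc theta mu = Fx Cs Dc theta x.
  by apply: le_anti; rewrite hmu partA.
exists (Fx Cs Dc theta x); split; split.
- by have [yc [h1 h2]] := partC0 theta hx HC Hpotts; exists x, yc.
- move=> yv yc hf; rewrite -eD; apply: le_trans (partB Hth hf).
  apply: partA; case: hf => h01 [_ [_ [hs _]]]; split => // i p; by have /andP[] := h01 i p.
- by exists mu.
- by move=> lam; apply: partA.
Qed.
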